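(* Let $D$ be a connected oriented virtual singular link diagram with $k$ components, and let $S_0$ be the state of $D$ obtained by applying the oriented resolution at every classical and singular crossing of $D$. Then $\overline{R}(S_0)\in\mathbb{Z}[A^4,A^{-4}]\cdot A^{2k}$.
   Context: An oriented virtual singular link diagram is a generic immersion of finitely many oriented circles (its components) into $\mathbb{R}^2$ with finitely many transverse double points, each decorated as a classical crossing (with over/under information and the usual sign $\pm1$), a singular crossing, or a virtual crossing. The diagram is connected if it is not a disjoint union of two nonempty diagrams (i.e., its image in the plane is connected). At a classical or singular crossing, the oriented resolution replaces it by two disjoint arcs respecting orientation; the disoriented resolution replaces it by one arc joining the two incoming ends with a sink bivalent vertex and one arc joining the two outgoing ends with a source bivalent vertex. Virtual crossings are kept. A state $S$ of $D$ is a choice of resolution at every classical and singular crossing; it is a collection of immersed closed curves (all intersections virtual). $\|S\|$ = number of closed curves of $S$; $a(S)$ = #(negative classical crossings with oriented resolution) $-$ #(positive classical crossings with oriented resolution); $b(S)$ the same for disoriented resolutions; $\alpha(S),\beta(S)$ = numbers of singular crossings with oriented, resp. disoriented, resolution. The weighted state contribution is $\overline{R}(S)=A^{2a(S)+4b(S)}(-A^2-A^{-2})^{\alpha(S)+\|S\|}(-A^4-A^{-4})^{\beta(S)}h^{\frac{1-i(S)}{2}}$, where $i(S)\in\{\pm1\}$ is the parity of $S$: choosing a map $\tau$ from the edges of $S$ (arcs between consecutive bivalent vertices; a closed curve without vertices is one edge) to $\{\pm1\}$ with different values on edges sharing a vertex, $i(S)$ is the product over all virtual crossings $v$ of $\tau(e)\tau(e')$,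 where $e,e'$ are the edges meeting at $v$ (independent of $\tau$). (For $S_0$, which has no bivalent vertices, $i(S_0)=1$.) *)

(* Defs.v *)
From HB Require Import structures.
From mathcomp Require Import all_boot all_order all_fingroup all_algebra.

Set Implicit Arguments.
Unset Strict Implicit.
Unset Printing Implicit Defensive.

Import Order.TTheory GRing.Theory Num.Theory.

(* At each crossing two strands pass; they are labelled by a bool.  A        *)
(* "passage" (c, s) is the passage of the link through crossing c along      *)
(* strand s.  nextp (c, s) is the passage reached next when one leaves c     *)
(* along strand s following the orientation (a permutation of passages).     *)
(* nfree is the number of components carrying no crossing at all.           *)
(* The plane immersion is encoded by a rotation system: a dart (c, s, o) is  *)
(* the half-edge at c of strand s, outgoing if o = true, incoming otherwise. *)
(* rot c = true means the counterclockwise order of darts around c is        *)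
(*   in_false, in_true, out_false, out_true                                  *)
(* and rot c = false means it is in_false, out_true, out_false, in_true      *)
(* (transversality: the two darts of one strand are opposite).               *)

Inductive ckind := Classical of bool (* the over strand *) | Singular | Virtual.

Unset Implicit Arguments.
Record vsdiagram := VSDiagram {
  ncross : nat;
  kind : 'I_ncross -> ckind;
  nextp : {perm ('I_ncross * bool)};
  rot : 'I_ncross -> bool;
  nfree : nat
}.

Set Implicit Arguments.

Definition dart (D : vsdiagram) := ('I_(ncross D) * bool * bool)%type.

Definition symc (T : Type) (r : rel T) : rel T := fun x y => r x y || r y x.

Section Diagram.
Variable D : vsdiagram.
Local Notation n := (ncross D).
Local Notation pass := ('I_n * bool)%type.

Definition ncomp : nat := n_comp (symc (frel (nextp D))) (@predT pass) + nfree D.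

Definition cadj : rel 'I_n :=
  fun c c' => [exists s : bool, (nextp D (c, s)).1 == c'].

Definition connected_diagram : Prop :=
  if n == 0%N then is_true (nfree D <= 1)%N
  else (nfree D == 0%N) /\ forall c c' : 'I_n, connect (symc cadj) c c'.

Definition alpha (d : dart D) : dart D :=
  let: (c, s, o) := d in
  if o then let p := nextp D (c, s) in (p.1, p.2, false)
  else let p := ((nextp D)^-1)%g (c, s) in (p.1, p.2, true).

(* counterclockwise successor of a dart around its crossing *)
Definition sigma (d : dart D) : dart D :=
  let: (c, s, o) := d in
  if rot D c then (c, ~~ s, o (+) s) else (c, ~~ s, o (+) ~~ s).

Definition phi (d : dart D) : dart D := sigma (alpha d).

Definition nfaces : nat := n_comp (symc (frel phi)) (@predT (dart D)).

Definition ngraphcomp : nat := n_comp (symc cadj) (@predT 'I_n).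

(* the rotation system is a plane embedding: Euler's formula V - E + F = 2 *)
(* on every connected component (V = n, E = 2n).                            *)
Definition planar : Prop := nfaces = (n + 2 * ngraphcomp)%N.

(* A state: st c = true means disoriented resolution at c, false oriented   *)
(* (the value is irrelevant at virtual crossings).                          *)
Definition is_virtual (c : 'I_n) : bool := if kind D c is Virtual then true else false.
Definition is_singular (c : 'I_n) : bool := if kind D c is Singular then true else false.
Definition is_classical (c : 'I_n) : bool := if kind D c is Classical _ then true else false.
Definition is_positive (c : 'I_n) : bool :=
  if kind D c is Classical o then rot D c != o else false.
Definition is_negative (c : 'I_n) : bool :=
  if kind D c is Classical o then rot D c == o else false.

Definition arc_rel : rel (dart D) := fun d d' =>
  [&& d.2, ~~ d'.2 & (d'.1 == nextp D d.1)].

(* junctions of the state at the crossings; the bool says whether the     *)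
(* junction is a bivalent vertex (disoriented resolution)                 *)
Definition junction (st : 'I_n -> bool) (d d' : dart D) : bool :=
  let: (c, s, o) := d in let: (c', s', o') := d' in
  (c == c') &&
  (if is_virtual c then (s' == s) && ~~ o && o'
   else if st c then (o == o') && (s' == ~~ s)
   else (s' == ~~ s) && ~~ o && o').

Definition state_rel (st : 'I_n -> bool) : rel (dart D) :=
  symc (fun d d' => arc_rel d d' || junction st d d').

Definition ncurves (st : 'I_n -> bool) : nat :=
  n_comp (state_rel st) predT + nfree D.

Definition a_S (st : 'I_n -> bool) : int :=
  (#|[set c | is_negative c && ~~ st c]|%:Z - #|[set c | is_positive c && ~~ st c]|%:Z)%R.
Definition b_S (st : 'I_n -> bool) : int :=
  (#|[set c | is_negative c && st c]|%:Z - #|[set c | is_positive c && st c]|%:Z)%R.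
Definition alpha_S (st : 'I_n -> bool) : nat := #|[set c | is_singular c && ~~ st c]|.
Definition beta_S (st : 'I_n -> bool) : nat := #|[set c | is_singular c && st c]|.

(* tau : an edge labelling (on darts) constant along edges of the state and *)
(* changing at every bivalent vertex                                        *)
Definition tau_ok (st : 'I_n -> bool) (tau : {ffun dart D -> bool}) : bool :=
  [forall d : dart D, forall d' : dart D,
     (arc_rel d d' ==> (tau d == tau d')) &&
     (junction st d d' ==>
        ((tau d != tau d') == (~~ is_virtual d.1.1 && st d.1.1)))].

(* i(S) = -1 : the product over virtual crossings of tau(e) tau(e') is -1 *)
Definition odd_parity (st : 'I_n -> bool) : bool :=
  [exists tau : {ffun dart D -> bool}, tau_ok st tau &&
     odd #|[set v | is_virtual v && (tau (v, false, false) != tau (v, true, false))]|].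

End Diagram.

Definition LR := {fraction {poly {poly int}}}.
Definition Avar : LR := tofrac ('X : {poly {poly int}}).
Definition hvar : LR := tofrac (('X : {poly int})%:P).

Local Open Scope ring_scope.

Definition Rbar (D : vsdiagram) (st : 'I_(ncross D) -> bool) : LR :=
  Avar ^ (2 * a_S st + 4 * b_S st)
  * (- Avar ^+ 2 - Avar ^- 2) ^+ (alpha_S st + ncurves st)
  * (- Avar ^+ 4 - Avar ^- 4) ^+ (beta_S st)
  * (if odd_parity st then hvar else 1).

Definition S0 (D : vsdiagram) : 'I_(ncross D) -> bool := fun _ => false.
Arguments S0 : clear implicits.

(* Main.v *)
From HB Require Import structures.
Require Import Defs.
From mathcomp Require Import all_boot all_order all_fingroup all_algebra.
From mathcomp Require Import ring zify.
Set Implicit Arguments. Unset Strict Implicit. Unset Printing Implicit Defensive.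
Import Order.TTheory GRing.Theory Num.Theory.
Local Open Scope ring_scope.

Definition F2o := GRing.regular 'F_2.

Definition mklin (U V : vectType 'F_2) (f : U -> V) (H : linear f) : 'Hom(U, V) :=
  linfun (HB.pack f (GRing.isLinear.Build _ _ _ _ f H) : {linear U -> V}).
Lemma mklinE (U V : vectType 'F_2) (f : U -> V) (H : linear f) u : mklin H u = f u.
Proof. by rewrite /mklin lfunE. Qed.

Lemma dim_ffunF2 (I : finType) : \dim (fullv : {vspace {ffun I -> F2o}}) = #|I|.
Proof. by rewrite dimvf /dim /= muln1. Qed.

Lemma dimF2o : \dim (fullv : {vspace F2o}) = 1%N.
Proof. by rewrite dimvf /dim. Qed.

Lemma F2_cases (x : 'F_2) : x = 0 \/ x = 1.
Proof. 
have : (x < 2)%N by case: x.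
case: x => -[|[|m]] H _ /=; [left|right|by []]; exact: val_inj.
Qed.
Lemma F2_add_same (x : 'F_2) : x + x = 0.
Proof. by case: (F2_cases x) => ->; apply: val_inj. Qed.
Lemma F2_opp (x : 'F_2) : - x = x.
Proof. by apply/eqP; rewrite eq_sym -subr_eq0 opprK F2_add_same. Qed.
Lemma F2_neq0D (x y : 'F_2) : (x + y != 0) = (x != 0) (+) (y != 0).
Proof. by case: (F2_cases x) => ->; case: (F2_cases y) => ->. Qed.
Lemma F2_nat (b : bool) : ((b%:R : 'F_2) != 0) = b.
Proof. by case: b. Qed.

Lemma connect_trans_pred (T : finType) (e : rel T) (P : T -> Prop) x y :
  (forall a b, e a b -> P a -> P b) -> connect e x y -> P x -> P y.
Proof.
move=> H /connectP [p Hp ->]; elim: p x Hp => //= z p IH x /andP [Hxz Hp] Px.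
exact: IH Hp (H _ _ Hxz Px).
Qed.

Section LA.
Variable D : vsdiagram.
Local Notation n := (ncross D).
Local Notation dt := (dart D).

Lemma alphaK : involutive (@alpha D).
Proof.
move=> [[c s] o]; case: o => /=.
  by case E: (nextp D (c,s)) => [c' s'] /=; rewrite -E permK.
by case E: ((nextp D)^-1%g (c,s)) => [c' s'] /=; rewrite -E permKV.
Qed.

Lemma phi_alpha (d : dt) : phi (alpha d) = sigma d.
Proof. by rewrite /phi alphaK. Qed.

Definition DV := {ffun dart D -> F2o}.
Definition VV := {ffun 'I_n -> F2o}.
Definition EV := {ffun ('I_n * bool) -> F2o}.

Definition PHIf (g : DV) : DV := [ffun d => g (phi d) - g d].
Fact PHIf_lin : linear PHIf.
Proof. move=> a u v; apply/ffunP => d; rewrite !ffunE /GRing.scale /=; ring. Qed.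
Definition PHI := mklin PHIf_lin.

Definition Bf (g : DV) : DV := [ffun d => g d + g (sigma d)].
Fact Bf_lin : linear Bf.
Proof. move=> a u v; apply/ffunP => d; rewrite !ffunE /GRing.scale /=; ring. Qed.
Definition B := mklin Bf_lin.

Definition ALPf (g : DV) : DV := [ffun d => g (alpha d) - g d].
Fact ALPf_lin : linear ALPf.
Proof. move=> a u v; apply/ffunP => d; rewrite !ffunE /GRing.scale /=; ring. Qed.
Definition ALP := mklin ALPf_lin.

Definition KVf (t : DV) : VV := [ffun c => \sum_(s : bool) \sum_(o : bool) t (c,s,o)].
Fact KVf_lin : linear KVf.
Proof. move=> a u v; apply/ffunP => d; rewrite !ffunE !big_bool /= !ffunE /GRing.scale /=; ring. Qed.
Definition KV := mklin KVf_lin.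

Definition RESf (t : DV) : EV := [ffun p => t (p.1, p.2, true)].
Fact RESf_lin : linear RESf.
Proof. move=> a u v; apply/ffunP => d; rewrite !ffunE /GRing.scale /=; ring. Qed.
Definition RES := mklin RESf_lin.

Definition SUMf (y : VV) : F2o := \sum_c y c.
Fact SUMf_lin : linear SUMf.
Proof.
move=> a u v; rewrite /SUMf.
rewrite (eq_bigr (fun c => a * u c + v c)); last by move=> c _; rewrite !ffunE.
by rewrite big_split /= -mulr_sumr.
Qed.
Definition SUM := mklin SUMf_lin.

Lemma inPHI g : (g \in lker PHI) = [forall d, g (phi d) == g d].
Proof.
rewrite memv_ker mklinE; apply/eqP/forallP => [H d|H].
  by move/ffunP: H => /(_ d); rewrite !ffunE => /eqP; rewrite subr_eq0.
by apply/ffunP => d; rewrite !ffunE; apply/eqP; rewrite subr_eq0.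
Qed.

Lemma inALP g : (g \in lker ALP) = [forall d, g (alpha d) == g d].
Proof.
rewrite memv_ker mklinE; apply/eqP/forallP => [H d|H].
  by move/ffunP: H => /(_ d); rewrite !ffunE => /eqP; rewrite subr_eq0.
by apply/ffunP => d; rewrite !ffunE; apply/eqP; rewrite subr_eq0.
Qed.

Lemma dimALP : (\dim (lker ALP) <= 2 * n)%N.
Proof.
have H0 : (lker ALP :&: lker RES = 0)%VS.
  apply/eqP; rewrite -subv0; apply/subvP => t /memv_capP [Ha Hr].
  rewrite memv0; apply/eqP/ffunP => -[[c s] o]; rewrite ffunE.
  move: Hr; rewrite memv_ker mklinE => /eqP/ffunP Hr.
  case: o; first by move: (Hr (c, s)); rewrite !ffunE.
  move: Ha; rewrite inALP => /forallP /(_ (c, s, false)) /eqP <-.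
  by move: (Hr ((nextp D)^-1%g (c,s))); rewrite !ffunE.
rewrite -(limg_dim_eq H0).
apply: leq_trans (dimvS (subvf _)) _.
by rewrite dim_ffunF2 card_prod card_ord card_bool muln2 -mul2n.
Qed.


Definition delta (c : 'I_n) : VV := [ffun x => (x == c)%:R].

Lemma sum_ind (x a : 'I_n) b c :
  \sum_(s : bool) \sum_(o : bool) (((x, s, o) == (a, b, c) :> dt)%:R : F2o) = (x == a)%:R.
Proof.
rewrite !big_bool /= !xpair_eqE.
by case: (x == a); case: b; case: c; rewrite /= ?addr0 ?add0r.
Qed.

Lemma edge_in_img (p : 'I_n * bool) :
  delta p.1 + delta (nextp D p).1 \in (KV @: lker ALP)%VS.
Proof.
set out : dt := (p.1, p.2, true).
pose tp : DV := [ffun d => ((d == out)%:R + (d == alpha out)%:R : F2o)].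
apply/memv_imgP; exists tp.
  rewrite inALP; apply/forallP => d; rewrite !ffunE.
  by rewrite (inv_eq alphaK) (inj_eq (can_inj alphaK)) addrC.
apply/ffunP => x; rewrite mklinE !ffunE.
rewrite (eq_bigr (fun s => \sum_(o : bool) ((((x, s, o) == out :> dt)%:R : F2o)
   + (((x,s,o) == alpha out :> dt)%:R)))); last first.
  by move=> s _; apply: eq_bigr => o _; rewrite ffunE.
rewrite (eq_bigr (fun s => \sum_(o : bool) (((x, s, o) == out :> dt)%:R : F2o)
   + \sum_(o : bool) (((x,s,o) == alpha out :> dt)%:R))); last first.
  by move=> s _; rewrite big_split.
rewrite big_split /= /out sum_ind /alpha /=.
have -> : nextp D (p.1, p.2) = nextp D p by rewrite -surjective_pairing.
by rewrite [in RHS](surjective_pairing (nextp D p)) sum_ind.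
Qed.

Variable c0 : 'I_n.
Hypothesis hconn : forall c c', connect (symc (@cadj D)) c c'.

Lemma delta_in_img c : delta c + delta c0 \in (KV @: lker ALP)%VS.
Proof.
apply: (@connect_trans_pred _ _ (fun c => delta c + delta c0 \in (KV @: lker ALP)%VS) c0 c) (hconn c0 c) _.
  move=> a b Hab Ha.
  have -> : delta b + delta c0 = (delta a + delta c0) + (delta a + delta b).
    by apply/ffunP => x; rewrite !ffunE; case: (x == a); case: (x == b); case: (x == c0); apply: val_inj.
  apply: memvD => //.
  case/orP: Hab => /existsP [s /eqP Hs].
    by rewrite -Hs; exact: (edge_in_img (a, s)).
  by rewrite addrC -Hs; exact: (edge_in_img (b, s)).
have -> : delta c0 + delta c0 = 0 by apply/ffunP => x; rewrite !ffunE F2_add_same.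
exact: mem0v.
Qed.

Lemma dimKVimg : (n - 1 <= \dim (KV @: lker ALP))%N.
Proof.
have Hsub : (lker SUM <= KV @: lker ALP)%VS.
  apply/subvP => y; rewrite memv_ker mklinE /SUMf => /eqP Hy.
  have -> : y = \sum_c y c *: (delta c + delta c0).
    apply/ffunP => x; rewrite sum_ffunE.
    rewrite (eq_bigr (fun c => y c * (x == c)%:R + y c * (x == c0)%:R)); last first.
      by move=> c _; rewrite !ffunE /GRing.scale /= mulrDr.
    rewrite big_split /= -mulr_suml Hy mul0r addr0.
    rewrite (bigD1 x) //= eqxx mulr1 big1 ?addr0 // => c /negPf.
    by rewrite eq_sym => ->; rewrite mulr0.
  by apply: memv_suml => c _; apply: memvZ; exact: delta_in_img.
have := limg_ker_dim SUM fullv; rewrite capfv dim_ffunF2 card_ord => H.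
have : (\dim (SUM @: fullv) <= 1)%N by apply: leq_trans (dimvS (subvf _)) _; rewrite dimF2o.
move: (dimvS Hsub); lia.
Qed.

Lemma dimZ : (\dim (lker ALP :&: lker KV) <= n + 1)%N.
Proof.
have := limg_ker_dim KV (lker ALP); move: dimKVimg dimALP.
have : (0 < n)%N by case: (n) c0 => // -[].
lia.
Qed.


Definition ephi : rel dt := symc (frel (@phi D)).
Lemma symE : connect_sym ephi.
Proof. by apply: sym_connect_sym => x y; rewrite /ephi /symc orbC. Qed.

Definition RT := {x : dt | roots ephi x}.
Definition EXTf (y : {ffun RT -> F2o}) : DV :=
  [ffun d => y (exist _ (fingraph.root ephi d) (roots_root symE d))].
Fact EXTf_lin : linear EXTf.
Proof. move=> a u v; apply/ffunP => d; rewrite !ffunE /GRing.scale /=; ring. Qed.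
Definition EXT := mklin EXTf_lin.

Lemma dimG : (nfaces D <= \dim (lker PHI))%N.
Proof.
have H0 : (fullv :&: lker EXT = 0)%VS.
  rewrite capfv; apply/eqP; rewrite -subv0; apply/subvP => y.
  rewrite memv_ker mklinE memv0 => /eqP /ffunP Hy; apply/eqP/ffunP => r.
  move: (Hy (val r)); rewrite !ffunE => <-; congr (y _); apply: val_inj => /=.
  by case: r => x /= /eqP ->.
have Hsub : (EXT @: fullv <= lker PHI)%VS.
  apply/subvP => _ /memv_imgP [y _ ->]; rewrite inPHI; apply/forallP => d.
  rewrite mklinE !ffunE; apply/eqP; congr (y _); apply: val_inj => /=.
  apply/(fingraph.rootP symE); apply: connect1; by rewrite /ephi /symc /= eqxx orbT.
apply: leq_trans (dimvS Hsub); rewrite (limg_dim_eq H0) dim_ffunF2 /nfaces.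
by rewrite card_sig; apply: eq_leq; apply: eq_card => x; rewrite !inE andbT.
Qed.

Definition cst : DV := [ffun => 1].

Lemma dimGB : (\dim (lker PHI :&: lker B) <= 1)%N.
Proof.
suff Hsub : (lker PHI :&: lker B <= <[cst]>)%VS.
  by apply: leq_trans (dimvS Hsub) _; rewrite dim_vline leq_b1.
apply/subvP => g /memv_capP [Hp Hb].
move: Hp; rewrite inPHI => /forallP Hp.
move: Hb; rewrite memv_ker mklinE => /eqP /ffunP Hb.
have Hs (d : dt) : g (sigma d) = g d.
  move: (Hb d); rewrite !ffunE => /eqP; rewrite addr_eq0 F2_opp => /eqP ->. done.
have Ha (d : dt) : g (alpha d) = g d by rewrite -Hs -phi_alpha alphaK; apply/eqP; exact: Hp.
pose gc c := g (c, false, false).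
have Hc c s o : g (c, s, o) = gc c.
  move: (Hs (c,false,false)) (Hs (c,true,false)) (Hs (c,false,true)) (Hs (c,true,true)).
  rewrite /sigma /gc; case: (Defs.rot D c); case: s; case: o => /=; congruence.
have Hadj c : gc c = gc c0.
  apply: (@connect_trans_pred _ _ (fun c => gc c = gc c0) c0 c) (hconn c0 c) _ => //.
  move=> a b Hab Ha'; rewrite -Ha'.
  case/orP: Hab => /existsP [s /eqP Hs'].
    by rewrite -(Hc a s true) -Ha /= (surjective_pairing (nextp D (a, s))) Hs' Hc.
  by rewrite -(Hc b s true) -Ha /= (surjective_pairing (nextp D (b, s))) Hs' Hc.
apply/vlineP; exists (gc c0); apply/ffunP => -[[c s] o].
by rewrite !ffunE /GRing.scale /= mulr1 Hc Hadj.
Qed.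


Lemma imB_sub : (B @: lker PHI <= lker ALP :&: lker KV)%VS.
Proof.
apply/subvP => _ /memv_imgP [g Hg ->].
move: Hg; rewrite inPHI => /forallP Hp.
have Hp' (d : dt) : g (phi d) = g d by apply/eqP; exact: Hp.
rewrite memv_cap; apply/andP; split.
  rewrite inALP; apply/forallP => d; rewrite mklinE !ffunE.
  rewrite -[sigma (alpha d)]/(phi d) Hp' -phi_alpha Hp'; apply/eqP; ring.
rewrite memv_ker mklinE; apply/eqP/ffunP => c; rewrite !ffunE !big_bool /= !mklinE !ffunE.
rewrite /sigma /=; case: (Defs.rot D c) => /=;
  case: (F2_cases (g (c, true, true))) => ->; case: (F2_cases (g (c, true, false))) => ->;
  case: (F2_cases (g (c, false, true))) => ->; case: (F2_cases (g (c, false, false))) => ->;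
  by apply: val_inj.
Qed.

Hypothesis hfaces : nfaces D = (n + 2)%N.

Lemma imB_eq : (B @: lker PHI)%VS = (lker ALP :&: lker KV)%VS.
Proof.
apply/eqP; rewrite eqEdim imB_sub /=.
have := limg_ker_dim B (lker PHI); move: dimGB dimG dimZ; rewrite hfaces; lia.
Qed.


Lemma card_sum (T : finType) (Q : pred T) : #|[set x | Q x]| = (\sum_x (Q x : nat))%N.
Proof.
rewrite -sum1_card big_mkcond /=; apply: eq_bigr => x _; rewrite inE; by case: (Q x).
Qed.

Lemma odd_sum (T : finType) (f : T -> nat) :
  odd (\sum_x f x) = \big[addb/false]_x odd (f x).
Proof. exact: (big_morph odd oddD). Qed.

Lemma even_parity : ~~ odd_parity (S0 D).
Proof.
apply/existsP => -[tau /andP [/forallP Hok Hodd]].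
have Harc (d d' : dt) : arc_rel d d' -> tau d = tau d'.
  by move=> H; move: (Hok d) => /forallP /(_ d') /andP [/implyP /(_ H) /eqP -> _].
have Hjn (d d' : dt) : junction (S0 D) d d' -> tau d = tau d'.
  move=> H; move: (Hok d) => /forallP /(_ d') /andP [_ /implyP /(_ H)].
  by rewrite andbF => /eqP /negbFE /eqP.
have Ha (d : dt) : tau (alpha d) = tau d.
  case: d => -[c s] [] /=.
    by symmetry; apply: Harc; rewrite /arc_rel /= -surjective_pairing eqxx.
  by apply: Harc; rewrite /arc_rel /= -surjective_pairing permKV eqxx.
have Hj c s : tau (c, s, false) = tau (c, if is_virtual c then s else ~~ s, true).
  apply: Hjn; rewrite /junction eqxx /=.
  by case: (is_virtual c); rewrite /S0 /= eqxx.
pose t : DV := [ffun d => ((tau d)%:R : F2o)].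
have Ht : t \in (lker ALP :&: lker KV)%VS.
  rewrite memv_cap inALP; apply/andP; split.
    by apply/forallP => d; rewrite !ffunE Ha.
  rewrite memv_ker mklinE; apply/eqP/ffunP => c; rewrite !ffunE !big_bool /= !ffunE.
  rewrite !Hj; case: (is_virtual c) => /=;
  case: (tau (c, true, true)); case: (tau (c, false, true)); by apply: val_inj.
rewrite -imB_eq in Ht; case/memv_imgP: Ht => g /[dup] Hg; rewrite inPHI => /forallP Hp Htg.
pose gb d := g d != 0.
have Htau (d : dt) : tau d = gb d (+) gb (sigma d).
  move/ffunP: Htg => /(_ d); rewrite mklinE !ffunE => /(congr1 (fun x : 'F_2 => x != 0)).
  by rewrite F2_nat F2_neq0D.
have Hgp (d : dt) : gb (phi d) = gb d by rewrite /gb (eqP (Hp d)).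
pose P (d : dt) := gb d && gb (sigma d).
have HPa (d : dt) : P (alpha d) = P d.
  suff H (d' : dt) : P d' -> P (alpha d').
    by apply/idP/idP => [/H|/H //]; rewrite alphaK.
  move=> /andP [H1 H2]; rewrite /P -[sigma (alpha d')]/(phi d') Hgp H1 andbT.
  have := Ha d'; rewrite !Htau H1 H2 -[sigma (alpha d')]/(phi d') Hgp H1 /=.
  by case: (gb (alpha d')).
have Heven : ~~ odd (\sum_(d : dt) (P d : nat)).
  have -> : (\sum_(d : dt) (P d : nat) = \sum_(d : dt) ((P d && d.2) : nat)
           + \sum_(d : dt) ((P d && ~~ d.2) : nat))%N.
    by rewrite -big_split; apply: eq_bigr => d _; case: (P d); case: d.2.
  have -> : (\sum_(d : dt) ((P d && ~~ d.2) : nat) = \sum_(d : dt) ((P d && d.2) : nat))%N.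
    rewrite (reindex_inj (can_inj alphaK)) /=; apply: eq_bigr => -[[c s] o] _.
    by rewrite HPa; case: o.
  by rewrite addnn odd_double.
have Hsplit : (\sum_(d : dt) (P d : nat) = \sum_c \sum_s \sum_o (P (c,s,o) : nat))%N.
  rewrite pair_bigA /= pair_bigA /=.
  by apply: eq_bigr => -[[c s] o].
have Hloc c : odd (\sum_s \sum_o (P (c,s,o) : nat))%N
     = is_virtual c && (tau (c,false,false) != tau (c,true,false)).
  rewrite !big_bool /= /P !Htau.
  move: (Hj c false) (Hj c true); rewrite !Htau /sigma /=.
  case: (Defs.rot D c); case: (is_virtual c) => /=;
  case: (gb (c,true,true)); case: (gb (c,true,false)); case: (gb (c,false,true));
  case: (gb (c,false,false)) => /= H1 H2; congruence.
move: Hodd Heven; rewrite card_sum Hsplit !odd_sum.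
rewrite (eq_bigr _ (fun c _ => Hloc c)).
by rewrite (eq_bigr _ (fun c _ => oddb _)) => ->.
Qed.

End LA.

Lemma symc_sym (T : Type) (r : rel T) : symmetric (symc r).
Proof. by move=> x y; rewrite /symc orbC. Qed.

Lemma ncomp_perm (T : finType) (s : {perm T}) :
  n_comp (symc (frel s)) predT = #|porbits s|.
Proof.
set e := symc (frel s).
have sym_e : connect_sym e by apply: sym_connect_sym; exact: symc_sym.
have Hc x y : connect e x y = (y \in porbit s x).
  apply/idP/idP.
    move=> H; apply: (@connect_trans_pred _ e (fun z => z \in porbit s x) x y _ H (porbit_id s x)) => a b.
    case/orP => /eqP Hab Ha; rewrite -(eq_porbit_mem s a x) in Ha; rewrite -(eqP Ha).
      by subst b; rewrite -[s a]/((s ^+ 1)%g a) mem_porbit.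
    by subst a; rewrite porbit_sym -[s b]/((s ^+ 1)%g b) mem_porbit.
  case/porbitP => i ->; rewrite permX.
  apply: (connect_sub _ (fconnect_iter s i x)) => a b /eqP <-.
  by apply: connect1; rewrite /e /symc /= eqxx.
have -> : porbits s = porbit s @: [set x | roots e x].
  apply/setP => P; apply/imsetP/imsetP => -[z _ ->]; last by exists z.
  exists (fingraph.root e z); first by rewrite inE roots_root.
  apply/eqP; rewrite eq_porbit_mem -Hc sym_e; exact: connect_root.
rewrite card_in_imset; first by apply: eq_card => x; rewrite !inE andbT.
move=> x y; rewrite !inE => /eqP rx /eqP ry /eqP; rewrite eq_porbit_mem -Hc.
by move/(fingraph.rootP sym_e); rewrite rx ry.
Qed.

Section Cycles.
Variable D : vsdiagram.
Local Notation n := (ncross D).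
Local Notation pass := ('I_n * bool)%type.
Local Notation dt := (dart D).

Definition jf (p : pass) : pass := (p.1, if is_virtual p.1 then p.2 else ~~ p.2).
Lemma jfK : involutive jf.
Proof. by move=> [c s]; rewrite /jf /=; case: (is_virtual c) => //=; rewrite negbK. Qed.
Definition jp : {perm pass} := perm (can_inj jfK).
Lemma jpE p : jp p = jf p. Proof. by rewrite permE. Qed.

Lemma prod_tperm (l : seq 'I_n) (p : pass) : uniq l ->
  (\prod_(t <- [seq ((c, false), (c, true)) | c <- l]) tperm t.1 t.2)%g p
  = if p.1 \in l then (p.1, ~~ p.2) else p.
Proof.
case: p => c' s'; elim: l s' => [|c l IH] s' /=; first by rewrite big_nil perm1.
case/andP => cl ul; rewrite big_cons permM inE /=.
case: (eqVneq c' c) => [E|ne] /=.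
  subst c'.
  by case: s'; [rewrite tpermR | rewrite tpermL]; rewrite IH //= (negbTE cl).
rewrite tpermD ?IH //.
  by apply/eqP => -[E _]; rewrite E eqxx in ne.
by apply/eqP => -[E _]; rewrite E eqxx in ne.
Qed.

Lemma odd_jp : odd_perm jp = odd #|[set c | ~~ @is_virtual D c]|.
Proof.
set l := enum [pred c | ~~ @is_virtual D c].
have -> : jp = (\prod_(t <- [seq ((c, false), (c, true)) | c <- l]) tperm t.1 t.2)%g.
  apply/permP => -[c s]; rewrite prod_tperm ?enum_uniq // jpE /jf /= mem_enum inE.
  by case: (is_virtual c).
rewrite odd_perm_prod; last by apply/allP => t /mapP [c _ ->]; rewrite /dpair /= xpair_eqE andbF.
by rewrite size_map /l -cardE cardsE.
Qed.


Definition rho : {perm pass} := (nextp D * jp)%g.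
Lemma rhoE p : rho p = jf (nextp D p). Proof. by rewrite permM jpE. Qed.

Definition hout (p : pass) : dt := (p.1, p.2, true).
Definition pid (d : dt) : pass := if d.2 then d.1 else jf d.1.

Lemma ncurves_rho :
  n_comp (state_rel (S0 D)) predT = n_comp (symc (frel rho)) predT.
Proof.
have sym_e : connect_sym (state_rel (S0 D)).
  by apply: sym_connect_sym; exact: symc_sym.
have sym_e' : connect_sym (symc (frel rho)).
  by apply: sym_connect_sym; exact: symc_sym.
have cl : closed (state_rel (S0 D)) predT by [].
have Hjun c s : state_rel (S0 D) (c, s, false) (hout (jf (c, s))).
  rewrite /state_rel /symc /= /junction /= /hout /jf /= eqxx /=.
  by case: (is_virtual c); rewrite /S0 /= eqxx ?orbT.
have Harc p : state_rel (S0 D) (hout p) (nextp D p, false).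
  by rewrite /state_rel /symc /= /arc_rel /= -surjective_pairing eqxx.
rewrite (adjunction_n_comp hout sym_e sym_e' cl); last first.
  apply: (@intro_adjunction _ _ hout _ _ sym_e' _ cl (fun d _ => pid d)).
    move=> [[c s] o] _; split.
      case: o; first exact: connect0.
      by apply: connect1; exact: Hjun.
    move=> y _ H.
    have main (d d' : dt) : arc_rel d d' || junction (S0 D) d d' -> connect (symc (frel rho)) (pid d) (pid d').
      case/orP.
        case: d => -[c1 s1] o1; case: d' => -[c2 s2] o2; rewrite /arc_rel /= => /and3P [-> /negPf -> /eqP E].
        apply: connect1; rewrite /symc /= rhoE E /= eqxx //.
      case: d => -[c1 s1] o1; case: d' => -[c2 s2] o2; rewrite /junction => /andP [/eqP E].
      subst c2; rewrite /pid /jf /=.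
      case: (is_virtual c1) => /=.
        by move=> /andP [/andP [/eqP -> /negPf ->] ->]; exact: connect0.
      by rewrite /S0 /= => /andP [/andP [/eqP -> /negPf ->] ->]; exact: connect0.
    case/orP: H => H; first exact: main.
    by rewrite sym_e'; exact: main.
  move=> x' _; split; first by rewrite /pid /hout /= -surjective_pairing connect0.
  have one p : connect (state_rel (S0 D)) (hout p) (hout (rho p)).
    apply: connect_trans (connect1 (Harc p)) _.
    rewrite rhoE (surjective_pairing (nextp D p)).
    by apply: connect1; exact: Hjun.
  move=> y'; case/orP => /eqP <-; first exact: one.
  by rewrite sym_e; exact: one.
by apply: eq_n_comp_r.
Qed.

End Cycles.

Lemma Avar_neq0 : Avar != 0.
Proof. by rewrite /Avar tofrac_eq0 polyX_eq0. Qed.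

Lemma expand_pow (m : nat) : exists s : seq (int * int),
  (- Avar ^+ 2 - Avar ^- 2) ^+ m = \sum_(p <- s) p.1%:~R * Avar ^ (4 * p.2 - 2 * m%:Z).
Proof.
elim: m => [|m [s IH]].
  by exists [:: (1, 0)]; rewrite big_cons big_nil expr0 /= mulr0 subr0 expr0z mulr1 addr0.
exists ([seq (- p.1, p.2 + 1) | p <- s] ++ [seq (- p.1, p.2) | p <- s]).
rewrite exprS IH big_cat !big_map /= mulr_sumr -big_split /=.
apply: eq_bigr => p _.
have hA := Avar_neq0.
rewrite exprnP exprnN.
set k := 4 * p.2 - 2 * m%:Z.
have -> : 4 * (p.2 + 1) - 2 * (m.+1)%:Z = k + 2 by rewrite /k; lia.
have -> : 4 * p.2 - 2 * (m.+1)%:Z = k + (- 2%:Z) by rewrite /k; lia.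
rewrite (@expfzDr _ Avar k 2 hA) (@expfzDr _ Avar k (-2) hA) mulrNz.
ring.
Qed.


Lemma card_andF (T : finType) (P : pred T) : #|[set x | P x && false]| = 0%N.
Proof. by rewrite card_sum big1 // => x _; rewrite andbF. Qed.
Lemma card_andT (T : finType) (P : pred T) : #|[set x | P x && ~~ false]| = #|[set x | P x]|.
Proof. by rewrite !card_sum; apply: eq_bigr => x _; rewrite andbT. Qed.

Theorem lemma4p2 (D : vsdiagram) :
  planar D -> connected_diagram D ->
  exists s : seq (int * int),
    Rbar (S0 D) = \sum_(p <- s) p.1%:~R * Avar ^ (4 * p.2 + 2 * (ncomp D)%:Z).
Proof.
move=> Hpl Hcon.
have Hpar : ~~ odd_parity (S0 D).
  case: (posnP (ncross D)) => [n0|npos].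
    apply/existsP => -[tau /andP [_]].
    set A := [set v | _].
    have : (#|A| <= ncross D)%N by rewrite -[X in (_ <= X)%N]card_ord max_card.
    move=> H; have := leq_trans H (eq_leq n0).
    by rewrite leqn0 => /eqP ->.
  pose c0 := Ordinal npos.
  move: Hcon; rewrite /connected_diagram (negbTE (lt0n_neq0 npos)) => -[Hnf Hconn].
  have sym_c : connect_sym (symc (@cadj D)).
    by apply: sym_connect_sym; exact: symc_sym.
  have Hg : ngraphcomp D = 1%N.
    rewrite -(n_comp_connect sym_c c0) /ngraphcomp; apply: eq_n_comp_r => x.
    by rewrite !inE Hconn.
  have Hf : nfaces D = (ncross D + 2)%N by rewrite Hpl Hg.
  exact: (even_parity c0 Hconn Hf).
set neg := #|[set c | @is_negative D c]|.
set pos := #|[set c | @is_positive D c]|.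
set sing := #|[set c | @is_singular D c]|.
set nv := #|[set c | ~~ @is_virtual D c]|.
have Ha : a_S (S0 D) = (neg%:Z - pos%:Z)%R by rewrite /a_S /S0 !card_andT.
have Hb : b_S (S0 D) = 0 by rewrite /b_S /S0 !card_andF.
have Hal : alpha_S (S0 D) = sing by rewrite /alpha_S /S0 card_andT.
have Hbe : beta_S (S0 D) = 0%N by rewrite /beta_S /S0 card_andF.
have Hpart : nv = (neg + pos + sing)%N.
  rewrite /nv /neg /pos /sing !card_sum -!big_split /=; apply: eq_bigr => c _.
  rewrite /is_virtual /is_negative /is_positive /is_singular.
  by case: (kind D c) => //= o; case: (Defs.rot D c == o).
set Nc := n_comp (state_rel (S0 D)) predT.
set Np := n_comp (symc (frel (nextp D))) predT.
have Hodd : odd Nc = odd Np (+) odd nv.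
  rewrite /Nc ncurves_rho /Np !ncomp_perm -odd_jp.
  have := odd_permM (nextp D) (jp D); rewrite -/(rho D) /odd_perm -!addbA.
  by move/(congr1 (addb (odd #|{: 'I_(ncross D) * bool}|))); rewrite !addKb.
have Hev : ~~ odd (neg + pos + sing + Nc + Np).
  rewrite -Hpart !oddD Hodd; by case: (odd nv); case: (odd Np).
set N := (neg + pos + sing + Nc + Np)%N in Hev.
have HN : N = (N./2 * 2)%N by rewrite -{1}(odd_double_half N) (negbTE Hev) add0n muln2.
have [s E] := expand_pow (sing + ncurves (S0 D)).
pose q : int := ((N./2)%:Z - pos%:Z - sing%:Z - Nc%:Z - Np%:Z - (nfree D)%:Z)%R.
have Hq : (2 * (neg%:Z - pos%:Z) + 4 * 0 - 2 * (sing + ncurves (S0 D))%:Z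
           = 4 * q + 2 * (ncomp D)%:Z)%R.
  rewrite /q /ncomp /ncurves -/Nc -/Np.
  move: HN; rewrite /N; lia.
exists [seq (p.1, (p.2 + q)%R) | p <- s].
rewrite /Rbar (negbTE Hpar) Hb Hbe Hal Ha mulr1 expr0 mulr1 E big_map mulr_sumr.
apply: eq_bigr => p _ /=.
rewrite mulrCA -expfzDr ?Avar_neq0 //; congr (_ * Avar ^ _).
move: Hq; lia.
Qed.
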